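(* Suppose the difference-in-means estimator $\widehat\tau_{DIM}$ is computed from outcomes generated under a balanced $K$-cluster randomized design $\mathcal{D}(\mathcal{C})$, and the potential outcomes follow the linear model $Y_i(\mathbf{Z}) = \alpha_i + \beta_i Z_i + \gamma_i e_i(\mathbf{Z})$ with fixed real coefficients $\alpha_i,\beta_i,\gamma_i$. Then $$\tau - \mathbb{E}_{\mathbf{Z}\sim\mathcal{D}(\mathcal{C})}[\widehat\tau_{DIM}] = \frac{2}{N}\cdot\frac{K}{K-1}\sum_{i\in[N]}\sum_{j\notin\mathcal{C}(i)} \gamma_i \sum_{s\in[M]} \frac{w_{is}}{\sum_{s'\in[M]} w_{is'}}\,\frac{w_{js}}{\sum_{k\in[N]} w_{ks}}.$$ Moreover, fix real numbers $\Gamma_0\le\Gamma_1$, not both zero. Then, among all partitions $\mathcal{C}$ of $[N]$ into $K$ equally sized clusters (with $K$ and $K_T$ fixed), the set of minimizers of $\max_{\boldsymbol\gamma\in[\Gamma_0,\Gamma_1]^N}\left|\tau-\mathbb{E}_{\mathbf{Z}\sim\mathcal{D}(\mathcal{C})}[\widehat\tau_{DIM}]\right|$ equals the set of minimizers of $\mathcal{H}(\mathcal{C})$.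
   Context: Setting: $N$ experimental units $[N]$ and $M$ interference units $[M]$, with known weights $w_{is}\ge 0$ for $i\in[N]$, $s\in[M]$; assume $\sum_{s} w_{is}>0$ for every $i$ and $\sum_i w_{is}>0$ for every $s$. A treatment assignment is $\mathbf{Z}\in\{-1,1\}^N$ ($1$ = treatment, $-1$ = control). The dose of interference unit $s$ is $d_s=\frac{\sum_{i\in[N]} w_{is}Z_i}{\sum_{i\in[N]} w_{is}}$ and the exposure of experimental unit $i$ is $e_i=e_i(\mathbf{Z})=\frac{\sum_{s\in[M]} w_{is}d_s}{\sum_{s\in[M]} w_{is}}$. Balanced $K$-cluster randomized design: $K\ge 2$ divides $N$, $\mathcal{C}=\{C_1,\dots,C_K\}$ is a partition of $[N]$ into $K$ clusters of equal size $N/K$, $\mathcal{C}(i)$ denotes the cluster containing $i$, and $\mathcal{D}(\mathcal{C})$ is the distribution of $\mathbf{Z}$ obtained by choosing $K_T$ clusters uniformly at random (fixed integer $0<K_T<K$), setting $Z_i=1$ for all units in these clusters and $Z_i=-1$ otherwise; $K_C=K-K_T$. Let $N_T=NK_T/K$ and $N_C=N-N_T$ (numbers of treated and control units). The difference-in-means estimator is $\widehat\tau_{DIM}=\frac{1}{N_T}\sum_{i:Z_i=1}Y_i-\frac{1}{N_C}\sum_{i:Z_i=-1}Y_i$, where $Y_i=Y_i(\mathbf{Z})$ is the observed outcome. The average total treatment effect is $\tau=\frac1N\sum_{i\in[N]}\big(Y_i(\mathbf{1})-Y_i(-\mathbf{1})\big)$. The clustering objective is $\mathcal{H}(\mathcal{C})=\sum_{i\in[N]}\sum_{j\in[N]\setminus\mathcal{C}(i)}\sum_{s\in[M]}\frac{w_{is}}{\sum_{s'\in[M]}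 w_{is'}}\frac{w_{js}}{\sum_{k\in[N]} w_{ks}}$. *)

(* Defs.v *)
From HB Require Import structures.
From mathcomp Require Import all_boot all_order all_algebra.
From mathcomp Require Import all_classical all_reals.

Set Implicit Arguments. Unset Strict Implicit. Unset Printing Implicit Defensive.
Import Order.TTheory GRing.Theory Num.Theory.
Local Open Scope ring_scope.

Section Defs.
Variables (R : realType) (N M : nat).

Definition rowsum (w : 'I_N -> 'I_M -> R) (i : 'I_N) : R := \sum_(s < M) w i s.
Definition colsum (w : 'I_N -> 'I_M -> R) (s : 'I_M) : R := \sum_(k < N) w k s.

Definition dose (w : 'I_N -> 'I_M -> R) (Z : 'I_N -> R) (s : 'I_M) : R :=
  (\sum_(i < N) w i s * Z i) / colsum w s.

Definition exposure (w : 'I_N -> 'I_M -> R) (Z : 'I_N -> R) (i : 'I_N) : R :=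
  (\sum_(s < M) w i s * dose w Z s) / rowsum w i.

Definition lin_outcome (w : 'I_N -> 'I_M -> R) (alpha beta gamma : 'I_N -> R)
  (Z : 'I_N -> R) (i : 'I_N) : R :=
  alpha i + beta i * Z i + gamma i * exposure w Z i.

Definition balanced_partition (P : {set {set 'I_N}}) (K : nat) : bool :=
  [&& finset.partition P [set: 'I_N], #|P| == K & [forall B in P, #|B| == (N %/ K)%N]].

Definition assign (S : {set {set 'I_N}}) (i : 'I_N) : R :=
  if i \in finset.cover S then 1 else -1.

Definition E_design (P : {set {set 'I_N}}) (KT : nat) (f : ('I_N -> R) -> R) : R :=
  (\sum_(S : {set {set 'I_N}} | (S \subset P) && (#|S| == KT)) f (assign S))
  / #|[set S : {set {set 'I_N}} | (S \subset P) && (#|S| == KT)]|%:R.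

Definition NT (K KT : nat) : R := ((N %/ K) * KT)%N%:R.
Definition NC (K KT : nat) : R := N%:R - NT K KT.

Definition tau_DIM (K KT : nat) (Y : ('I_N -> R) -> 'I_N -> R) (Z : 'I_N -> R) : R :=
  (NT K KT)^-1 * (\sum_(i < N | Z i == 1) Y Z i)
  - (NC K KT)^-1 * (\sum_(i < N | Z i == -1) Y Z i).

Definition tau (Y : ('I_N -> R) -> 'I_N -> R) : R :=
  N%:R^-1 * \sum_(i < N) (Y (fun _ => 1) i - Y (fun _ => -1) i).

Definition Hobj (w : 'I_N -> 'I_M -> R) (P : {set {set 'I_N}}) : R :=
  \sum_(i < N) \sum_(j < N | j \notin finset.pblock P i)
     \sum_(s < M) (w i s / rowsum w i) * (w j s / colsum w s).

Definition worst_bias (w : 'I_N -> 'I_M -> R) (K KT : nat)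
  (alpha beta : 'I_N -> R) (G0 G1 : R) (P : {set {set 'I_N}}) : R :=
  sup [set `|tau (lin_outcome w alpha beta gamma)
             - E_design P KT (tau_DIM K KT (lin_outcome w alpha beta gamma))|
       | gamma in [set g : 'I_N -> R | forall i, G0 <= g i <= G1]].

Definition is_minimizer (K : nat) (f : {set {set 'I_N}} -> R) (P : {set {set 'I_N}}) : Prop :=
  balanced_partition P K /\
  forall P', balanced_partition P' K -> f P <= f P'.

End Defs.

(* Main.v *)
Require Import Defs.
From HB Require Import structures.
From mathcomp Require Import all_boot all_order all_algebra.
From mathcomp Require Import all_classical all_reals.
From mathcomp Require Import ring lra.
From mathcomp Require Import fintype finset bigop.
Import Order.TTheory GRing.Theory Num.Theory.
Local Open Scope ring_scope.
Set Implicit Arguments. Unset Strict Implicit. Unset Printing Implicit Defensive.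

Lemma count_sup (T : finType) (P Tt : {set T}) k :
  Tt \subset P -> (#|Tt| <= k)%N ->
  #|[set S : {set T} | [&& S \subset P, #|S| == k & Tt \subset S]]|
  = 'C(#|P| - #|Tt|, k - #|Tt|)%N.
Proof.
move=> sTP leTk.
have cPT : #|P :\: Tt| = (#|P| - #|Tt|)%N by rewrite cardsD (finset.setIidPr sTP).
rewrite -cPT -cards_draws.
have inj : {in [set A : {set T} | A \subset P :\: Tt & #|A| == (k - #|Tt|)%N] &,
   injective (fun S => S :|: Tt)}.
  move=> A B; rewrite !inE => /andP[sA _] /andP[sB _] eqAB.
  apply/setP=> x; have := congr1 (fun X : {set T} => x \in X) eqAB; rewrite /= !inE.
  have := subsetP sA x; have := subsetP sB x; rewrite !inE.
  by case: (x \in A) (x \in B) (x \in Tt) (x \in P) => [] [] [] [] //= h1 h2; (try by move: (h1 isT)); move: (h2 isT).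
rewrite -(card_in_imset inj).
apply: eq_card => S; rewrite !inE; apply/idP/imsetP.
- case/and3P=> sSP /eqP cS sTS; exists (S :\: Tt).
    rewrite inE setSD //= cardsD (finset.setIidPr sTS) cS //.
  apply/setP=> x; rewrite !inE; have := subsetP sTS x.
  by case: (x \in Tt); case: (x \in S) => //= ->.
- case=> A; rewrite inE => /andP[sA /eqP cA] ->.
  rewrite subUset sTP subsetUr andbT.
  have sAP : A \subset P by apply: subset_trans sA (subsetDl _ _).
  rewrite sAP /= cardsU.
  have -> : A :&: Tt = set0.
    apply/setP=> x; rewrite !inE; have := subsetP sA x; rewrite !inE.
    by case: (x \in A); case: (x \in Tt) => //= ->.
  by rewrite cards0 subn0 cA (subnK leTk) eqxx.
Qed.

Section Basic.
Variables (R : realType) (N M : nat) (w : 'I_N -> 'I_M -> R).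
Hypothesis hw : forall i s, 0 <= w i s.
Hypothesis hrow : forall i, 0 < rowsum w i.
Hypothesis hcol : forall s, 0 < colsum w s.

Definition vv (i j : 'I_N) : R :=
  \sum_(s < M) (w i s / rowsum w i) * (w j s / colsum w s).

Lemma exposure_lin Z i : exposure w Z i = \sum_(j < N) vv i j * Z j.
Proof.
rewrite /exposure /dose /vv.
under [RHS]eq_bigr do rewrite mulr_suml.
rewrite exchange_big /= mulr_suml; apply: eq_bigr => s _.
rewrite mulr_suml mulr_sumr mulr_suml; apply: eq_bigr => j _.
have := hrow i; have := hcol s; rewrite !lt0r => /andP[hc _] /andP[hr _].
by field; apply/andP; split.
Qed.

Lemma dose1 s : dose w (fun _ => 1) s = 1.
Proof.
rewrite /dose (_ : \sum_(i0 < N) w i0 s * 1 = colsum w s).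
  by rewrite divff // lt0r_neq0.
by rewrite /colsum; apply: eq_bigr => ? _; rewrite mulr1.
Qed.

Lemma sum_vv i : \sum_(j < N) vv i j = 1.
Proof.
have := exposure_lin (fun _ => 1) i.
under [RHS]eq_bigr do rewrite mulr1.
move=> <-; rewrite /exposure.
under eq_bigr do rewrite dose1 mulr1.
by rewrite -/(rowsum w i) divff // lt0r_neq0.
Qed.

Lemma vv_ge0 i j : 0 <= vv i j.
Proof.
apply: sumr_ge0 => s _; apply: mulr_ge0; apply: divr_ge0 => //; apply: ltW.
  exact: hrow.
exact: hcol.
Qed.

End Basic.

Lemma sum_ind (R : realType) (T : finType) (p b : pred T) :
  \sum_(x | p x) (b x)%:R = #|[set x | p x && b x]|%:R :> R.
Proof.
rewrite -sum1_card natr_sum [RHS]big_mkcond [LHS]big_mkcond /=.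
by apply: eq_bigr => x _; rewrite inE; case: (p x); case: (b x).
Qed.

Section Part.
Variables (R : realType) (N K KT : nat) (P : {set {set 'I_N}}).
Hypothesis hP : balanced_partition P K.
Hypothesis hKT : (0 < KT < K)%N.

Lemma hpart : partition P [set: 'I_N].
Proof. by case/and3P: hP. Qed.
Lemma htriv : trivIset P.
Proof. by case/and3P: hpart. Qed.
Lemma hcover : cover P = [set: 'I_N].
Proof. by case/and3P: hpart => /eqP. Qed.
Lemma hcard : #|P| = K.
Proof. by case/and3P: hP => _ /eqP. Qed.

Lemma pbl_mem i : pblock P i \in P.
Proof. by apply: pblock_mem; rewrite hcover inE. Qed.
Lemma pbl_in i : i \in pblock P i.
Proof. by rewrite mem_pblock hcover inE. Qed.

Lemma assign_eq (S : {set {set 'I_N}}) (i : 'I_N) : S \subset P ->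
  assign R S i = if pblock P i \in S then 1 else -1.
Proof.
move=> sSP; rewrite /assign; congr (if _ then _ else _).
apply/bigcupP/idP.
  by case=> B BS iB; rewrite (def_pblock htriv (subsetP sSP B BS) iB).
by move=> h; exists (pblock P i) => //; apply: pbl_in.
Qed.

Definition Dp (S : {set {set 'I_N}}) := (S \subset P) && (#|S| == KT).

Lemma n0_eq : #|[set S : {set {set 'I_N}} | (S \subset P) && (#|S| == KT)]| = 'C(K, KT).
Proof. by rewrite cards_draws hcard. Qed.

Lemma n1_eq B : B \in P ->
  \sum_(S | Dp S) (B \in S)%:R = 'C(K.-1, KT.-1)%:R :> R.
Proof.
move=> BP; rewrite sum_ind.
have := @count_sup _ P [set B] KT; rewrite sub1set BP cards1 hcard subn1.
case/andP: hKT => kt0 _; rewrite subn1 => /(_ isT kt0) <-.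
by congr (_ %:R); apply: eq_card => S; rewrite !inE /Dp sub1set andbA.
Qed.

Definition c2 := if (1 < KT)%N then 'C(K.-2, KT.-2) else 0%N.

Lemma n2_eq B B' : B \in P -> B' \in P -> B != B' ->
  \sum_(S | Dp S) ((B \in S) && (B' \in S))%:R = c2%:R :> R.
Proof.
move=> BP B'P nBB; rewrite /c2; case: ifP => hkt; last first.
  rewrite big1 // => S /andP[_ /eqP cS].
  case: (boolP (B \in S)) => //= bS; case: (boolP (B' \in S)) => //= b'S.
  have : (#|[set B; B']| <= #|S|)%N by apply: subset_leq_card; rewrite subUset !sub1set bS.
  by rewrite cards2 nBB cS hkt.
rewrite sum_ind.
have := @count_sup _ P [set B; B'] KT; rewrite subUset !sub1set BP B'P cards2 nBB hcard.
rewrite !subn2 => /(_ isT hkt) <-.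
congr (_ %:R); apply: eq_card => S; rewrite !inE /Dp subUset !sub1set; by case: (_ \subset _); case: (_ == _).
Qed.

Variables (M : nat) (w : 'I_N -> 'I_M -> R).
Hypothesis hw : forall i s, 0 <= w i s.
Hypothesis hrow : forall i, 0 < rowsum w i.
Hypothesis hcol : forall s, 0 < colsum w s.

Definition xx (i : 'I_N) (S : {set {set 'I_N}}) : R := ((pblock P i \in S) : nat)%:R.

Variables (alpha beta gamma : 'I_N -> R).

Definition Yv S i := alpha i + beta i * (2 * xx i S - 1)
   + gamma i * \sum_(j < N) vv w i j * (2 * xx j S - 1).

Definition n1 : R := 'C(K.-1, KT.-1)%:R.
Definition av i := \sum_(j < N | j \in pblock P i) vv w i j.
Definition bv i := \sum_(j < N | j \notin pblock P i) vv w i j.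

Lemma xx_sq i S : xx i S * xx i S = xx i S.
Proof. by rewrite /xx; case: (_ \in S); rewrite ?mul1r ?mul0r. Qed.

Lemma xx_mul i j S : xx i S * xx j S = ((pblock P i \in S) && (pblock P j \in S) : nat)%:R.
Proof. by rewrite /xx; case: (_ \in S); case: (_ \in S); rewrite ?mul1r ?mul0r. Qed.

Lemma TS_eq i : \sum_(S | Dp S) xx i S * Yv S i =
  (alpha i + beta i) * n1 + gamma i * (av i * n1 + bv i * (2 * c2%:R - n1)).
Proof.
have pt : forall S, xx i S * Yv S i = (alpha i + beta i) * xx i S
   + gamma i * \sum_(j < N) vv w i j * (2 * (xx i S * xx j S) - xx i S).
  move=> S; have -> : \sum_(j < N) vv w i j * (2 * (xx i S * xx j S) - xx i S)
     = xx i S * \sum_(j < N) vv w i j * (2 * xx j S - 1).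
    by rewrite mulr_sumr; apply: eq_bigr => j _; ring.
  rewrite /Yv; set T := \sum_(j < N) _.
  clearbody T; rewrite /xx; case: (_ \in S) => /=; ring.
under eq_bigr do rewrite pt.
rewrite big_split /= -!mulr_sumr n1_eq ?pbl_mem //; congr (_ + _ * _).
rewrite exchange_big /=.
under eq_bigr do rewrite -mulr_sumr sumrB -mulr_sumr.
rewrite (bigID (fun j => j \in pblock P i)) /= /av /bv !mulr_suml.
congr (_ + _).
  apply: eq_bigr => j jb; rewrite n1_eq ?pbl_mem //.
  have ej : pblock P j = pblock P i by apply: def_pblock => //; [exact: htriv | exact: pbl_mem].
  under eq_bigr do rewrite xx_mul ej andbb.
  by rewrite n1_eq ?pbl_mem // /n1; ring.
apply: eq_bigr => j jb; rewrite n1_eq ?pbl_mem //.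
under eq_bigr do rewrite xx_mul.
rewrite n2_eq ?pbl_mem //.
by apply/eqP => ej; move: jb; rewrite ej pbl_in.
Qed.

Definition n0 : R := 'C(K, KT)%:R.

Lemma sum1_D : \sum_(S | Dp S) (1 : R) = n0.
Proof.
have := @sum_ind R _ Dp (fun _ => true); rewrite /= => h.
rewrite (eq_bigr (fun S => ((true : nat)%:R : R))) // h /n0 -n0_eq.
by congr (_ %:R); apply: eq_card => S; rewrite !inE andbT.
Qed.

Lemma sum2x j : \sum_(S | Dp S) (2 * xx j S - 1) = 2 * n1 - n0.
Proof. by rewrite sumrB -mulr_sumr n1_eq ?pbl_mem // sum1_D. Qed.

Lemma SY_eq i : \sum_(S | Dp S) Yv S i =
  alpha i * n0 + beta i * (2 * n1 - n0) + gamma i * (2 * n1 - n0).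
Proof.
rewrite /Yv !big_split /= -!mulr_sumr sum2x.
congr (_ + _ + _ * _).
  by rewrite -sum1_D mulr_sumr; apply: eq_bigr => S _; rewrite mulr1.
rewrite exchange_big /=.
under eq_bigr do rewrite -mulr_sumr sum2x.
by rewrite -mulr_suml sum_vv // mul1r.
Qed.

Lemma CS_eq i : \sum_(S | Dp S) (1 - xx i S) * Yv S i =
  \sum_(S | Dp S) Yv S i - \sum_(S | Dp S) xx i S * Yv S i.
Proof. by rewrite -sumrB; apply: eq_bigr => S _; rewrite mulrBl mul1r. Qed.

Lemma m1n1 : ((-1 : R) == 1) = false.
Proof. by apply/negbTE/eqP => h; lra. Qed.
Lemma n1m1 : ((1 : R) == -1) = false.
Proof. by apply/negbTE/eqP => h; lra. Qed.

Hypothesis hKN : (K %| N)%N.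

Lemma bin1 : (K * 'C(K.-1, KT.-1) = KT * 'C(K, KT))%N.
Proof.
case/andP: hKT => kt0 _; have := mul_bin_diag K KT.-1; rewrite prednK //.
Qed.

Lemma bin2 : (K.-1 * c2 = KT.-1 * 'C(K.-1, KT.-1))%N.
Proof.
rewrite /c2; case: ifP => h.
  have := mul_bin_diag K.-1 KT.-2.
  by rewrite (_ : KT.-2.+1 = KT.-1) //; case: KT h => [|[|k]].
have -> : KT = 1%N by case/andP: hKT; case: KT h => [|[|k]].
by rewrite muln0.
Qed.

Lemma comb (F G H J : 'I_N -> R) a b c d e :
  (forall i, a * F i - (b * G i - c * H i) / d = e * J i) ->
  a * (\sum_(i < N) F i) - (b * (\sum_(i < N) G i) - c * (\sum_(i < N) H i)) / d
   = e * \sum_(i < N) J i.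
Proof.
move=> h; rewrite !mulr_sumr -!sumrB mulr_suml -sumrB.
by apply: eq_bigr => i _; rewrite -h mulrBl.
Qed.

Lemma part1_sec (Y : ('I_N -> R) -> 'I_N -> R) :
  (forall Z : 'I_N -> R, (forall i, Z i = 1 \/ Z i = -1) ->
        forall i, Y Z i = alpha i + beta i * Z i + gamma i * exposure w Z i) ->
     tau Y - E_design P KT (tau_DIM K KT Y)
     = 2 / N%:R * (K%:R / (K%:R - 1)) *
       \sum_(i < N) \sum_(j < N | j \notin finset.pblock P i)
          gamma i * \sum_(s < M) (w i s / rowsum w i) * (w j s / colsum w s).
Proof.
move=> hY.
have hYS : forall S, Dp S -> forall i, Y (assign R S) i = Yv S i.
  move=> S /andP[sSP _] i; rewrite hY; last first.
    by move=> j; rewrite assign_eq //; case: ifP; auto.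
  rewrite /Yv exposure_lin // assign_eq //; congr (_ + _ * _ + _ * _).
    by rewrite /xx; case: ifP => _ /=; ring.
  apply: eq_bigr => j _; rewrite assign_eq // /xx; case: ifP => _ /=; ring.
have hDIM : forall S, Dp S -> tau_DIM K KT Y (assign R S) =
   (NT R N K KT)^-1 * \sum_(i < N) xx i S * Yv S i
   - (NC R N K KT)^-1 * \sum_(i < N) (1 - xx i S) * Yv S i.
  move=> S hS; rewrite /tau_DIM; case/andP: (hS) => sSP _.
  congr (_ * _ - _ * _); rewrite big_mkcond; apply: eq_bigr => i _;
    rewrite hYS // assign_eq // /xx; case: (pblock P i \in S) => /=;
    rewrite ?eqxx ?m1n1 ?n1m1 /=; ring.
rewrite /E_design (eq_bigr _ hDIM) n0_eq sumrB -!mulr_sumr.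
rewrite exchange_big [\sum_(S | Dp S) _]exchange_big /=.
have hY1 : forall i, Y (fun _ => 1) i = alpha i + beta i + gamma i.
  move=> i; rewrite hY; last by auto.
  rewrite exposure_lin //; under eq_bigr do rewrite mulr1.
  by rewrite sum_vv // mulr1 mulr1.
have hYm1 : forall i, Y (fun _ => -1) i = alpha i - beta i - gamma i.
  move=> i; rewrite hY; last by auto.
  rewrite exposure_lin // -mulr_suml sum_vv //; ring.
rewrite /tau; apply: comb => i.
rewrite CS_eq SY_eq TS_eq hY1 hYm1.
have hb : \sum_(j < N | j \notin pblock P i)
   gamma i * \sum_(s < M) (w i s / rowsum w i) * (w j s / colsum w s) = gamma i * bv i.
  by rewrite /bv /vv mulr_sumr.
have ha : av i = 1 - bv i.
  by rewrite -(sum_vv hrow hcol i) (bigID (fun j => j \in pblock P i)) /= /av /bv; ring.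
rewrite hb ha.
case/andP: hKT => kt0 ktK.
set L := (N %/ K)%N.
have hNL : N = (L * K)%N by rewrite divnK.
have L0 : (0 < L)%N.
  have : (0 < N)%N by case: (i) => /= m; case: (N) => //.
  by rewrite hNL muln_gt0 => /andP[].
have n0ne : n0 != 0 by rewrite /n0 pnatr_eq0 -lt0n bin_gt0 ltnW.
have Kne : K%:R != 0 :> R by rewrite pnatr_eq0 -lt0n (ltn_trans kt0).
have Lne : L%:R != 0 :> R by rewrite pnatr_eq0 -lt0n.
have KTne : KT%:R != 0 :> R by rewrite pnatr_eq0 -lt0n.
have K1ne : K%:R - 1 != 0 :> R.
  rewrite subr_eq0 (_ : 1 = 1%:R) // eqr_nat; apply/negP => /eqP h.
  by move: kt0 ktK; rewrite h; case: KT.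
have KKTne : K%:R - KT%:R != 0 :> R.
  rewrite subr_eq0 eqr_nat; apply/negP => /eqP h; by move: ktK; rewrite h ltnn.
have hn1 : n1 = KT%:R * n0 / K%:R.
  apply: (mulfI Kne); rewrite /n1 /n0 -[K%:R * _]natrM bin1 natrM; field.
  by rewrite Kne.
have hc2 : c2%:R = (KT%:R - 1) * n1 / (K%:R - 1) :> R.
  apply: (mulfI K1ne).
  have e1 : K%:R - 1 = (K.-1)%:R :> R by rewrite -subn1 natrB ?(ltn_trans kt0).
  have e2 : KT%:R - 1 = (KT.-1)%:R :> R by rewrite -subn1 natrB.
  rewrite e1 e2 /n1 -[(K.-1)%:R * _]natrM bin2 natrM; field.
  by rewrite -e1 K1ne.
have hNT : NT R N K KT = L%:R * KT%:R by rewrite /NT natrM.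
have hNC : NC R N K KT = L%:R * K%:R - L%:R * KT%:R by rewrite /NC hNT hNL natrM.
rewrite hNT hNC -/n0 hc2 hn1 {1 2}hNL natrM.
clearbody L; field.
by rewrite K1ne Kne Lne n0ne -mulrBr mulf_neq0.
Qed.

End Part.

Section Part2.
Variables (R : realType) (N M K KT : nat) (w : 'I_N -> 'I_M -> R).
Hypothesis hw : forall i s, 0 <= w i s.
Hypothesis hrow : forall i, 0 < rowsum w i.
Hypothesis hcol : forall s, 0 < colsum w s.
Hypothesis hKT : (0 < KT < K)%N.
Hypothesis hKN : (K %| N)%N.

Definition hh (P : {set {set 'I_N}}) (i : 'I_N) : R :=
  \sum_(j < N | j \notin pblock P i) \sum_(s < M) (w i s / rowsum w i) * (w j s / colsum w s).

Lemma hh_ge0 P i : 0 <= hh P i.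
Proof. by apply: sumr_ge0 => j _; apply: vv_ge0. Qed.

Definition cc : R := 2 / N%:R * (K%:R / (K%:R - 1)).

Lemma cc_ge0 : 0 <= cc.
Proof.
apply: mulr_ge0; first by apply: divr_ge0.
apply: divr_ge0 => //; rewrite subr_ge0 ler1n.
by case/andP: hKT => a b; apply: leq_trans a (ltnW b).
Qed.

Lemma bias_eq (P : {set {set 'I_N}}) (hP : balanced_partition P K) alpha beta gamma :
  `|tau (lin_outcome w alpha beta gamma)
     - E_design P KT (tau_DIM K KT (lin_outcome w alpha beta gamma))|
  = cc * `|\sum_(i < N) gamma i * hh P i|.
Proof.
rewrite (@part1_sec R N K KT P hP hKT M w hrow hcol alpha beta gamma hKN
   (lin_outcome w alpha beta gamma)) //.
rewrite normrM (ger0_norm cc_ge0) /cc; congr (_ * `|_|).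
by apply: eq_bigr => i _; rewrite /hh mulr_sumr.
Qed.

Lemma wb_eq (P : {set {set 'I_N}}) (hP : balanced_partition P K) alpha beta G0 G1 Gm :
  G0 <= G1 -> `|G0| <= Gm -> `|G1| <= Gm -> (Gm = `|G0| \/ Gm = `|G1|) ->
  worst_bias w K KT alpha beta G0 G1 P = cc * Gm * Hobj w P.
Proof.
move=> hG h0 h1 hatt.
have HH : Hobj w P = \sum_(i < N) hh P i by [].
have ub : forall gamma, (forall i, G0 <= gamma i <= G1) ->
   cc * `|\sum_(i < N) gamma i * hh P i| <= cc * Gm * Hobj w P.
  move=> g hg; rewrite -mulrA; apply: ler_wpM2l; first exact: cc_ge0.
  apply: le_trans (ler_norm_sum _ _ _) _.
  rewrite HH mulr_sumr; apply: ler_sum => i _.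
  rewrite normrM (ger0_norm (hh_ge0 P i)); apply: ler_wpM2r; first exact: hh_ge0.
  have := hg i; have := ler_norm G0; have := ler_norm (- G0); have := ler_norm G1.
  rewrite normrN ler_norml => ? ? ? /andP[? ?]; apply/andP; split; lra.
have att : exists2 g, (forall i, G0 <= g i <= G1) &
    cc * `|\sum_(i < N) g i * hh P i| = cc * Gm * Hobj w P.
  case: hatt => ->.
    exists (fun _ => G0) => [i|]; first by rewrite lexx hG.
    by rewrite -mulr_sumr normrM (ger0_norm (sumr_ge0 _ (fun i _ => hh_ge0 P i))) HH mulrA.
  exists (fun _ => G1) => [i|]; first by rewrite lexx hG.
  by rewrite -mulr_sumr normrM (ger0_norm (sumr_ge0 _ (fun i _ => hh_ge0 P i))) HH mulrA.
rewrite /worst_bias.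
apply/eqP; rewrite eq_le; apply/andP; split.
  apply: ge_sup.
    case: att => g hg _; exists (`|tau (lin_outcome w alpha beta g)
     - E_design P KT (tau_DIM K KT (lin_outcome w alpha beta g))|).
    by exists g.
  by move=> x [g hg <-]; rewrite bias_eq //; apply: ub.
case: att => g hg <-; rewrite -(bias_eq hP alpha beta).
apply: ub_le_sup.
  exists (cc * Gm * Hobj w P) => x [g' hg' <-]; rewrite bias_eq //; exact: ub.
by exists g.
Qed.

End Part2.

Lemma N_pos N K (P : {set {set 'I_N}}) :
  balanced_partition P K -> (0 < K)%N -> (0 < N)%N.
Proof.
case/and3P => /and3P[_ _ n0P] /eqP cP _ K0.
have : (0 < #|P|)%N by rewrite cP.
case/card_gt0P => B BP.
have : B != set0 by apply: contraNneq n0P => <-.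
by case/set0Pn => i _; case: (i) => m; case: (N).
Qed.

Theorem lemma1 (R : realType) (N M K KT : nat) (w : 'I_N -> 'I_M -> R)
  (hw : forall i s, 0 <= w i s)
  (hrow : forall i, 0 < rowsum w i)
  (hcol : forall s, 0 < colsum w s)
  (hK : (2 <= K)%N) (hKN : (K %| N)%N) (hKT : (0 < KT < K)%N) :
  (forall (P : {set {set 'I_N}}) (alpha beta gamma : 'I_N -> R)
          (Y : ('I_N -> R) -> 'I_N -> R),
     balanced_partition P K ->
     (forall Z : 'I_N -> R, (forall i, Z i = 1 \/ Z i = -1) ->
        forall i, Y Z i = alpha i + beta i * Z i + gamma i * exposure w Z i) ->
     tau Y - E_design P KT (tau_DIM K KT Y)
     = 2 / N%:R * (K%:R / (K%:R - 1)) *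
       \sum_(i < N) \sum_(j < N | j \notin finset.pblock P i)
          gamma i * \sum_(s < M) (w i s / rowsum w i) * (w j s / colsum w s))
  /\
  (forall (G0 G1 : R) (alpha beta : 'I_N -> R),
     G0 <= G1 -> ~ (G0 = 0 /\ G1 = 0) ->
     forall P : {set {set 'I_N}},
       is_minimizer K (worst_bias w K KT alpha beta G0 G1) P
       <-> is_minimizer K (Hobj w) P).
Proof.
split.
  by move=> P alpha beta gamma Y hP hY; exact: (part1_sec hP hKT hrow hcol hKN hY).
move=> G0 G1 alpha beta hG hnz P.
pose Gm := if `|G0| <= `|G1| then `|G1| else `|G0|.
have h0 : `|G0| <= Gm by rewrite /Gm; case: ifP => // /negbT; rewrite -ltNge => /ltW.
have h1 : `|G1| <= Gm by rewrite /Gm; case: ifP => // /negbT; rewrite -ltNge => /ltW.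
have hatt : Gm = `|G0| \/ Gm = `|G1| by rewrite /Gm; case: ifP; auto.
have Gm0 : 0 < Gm.
  rewrite lt_def (le_trans (normr_ge0 _) h0) andbT; apply/eqP => e.
  apply: hnz; move: h0 h1; rewrite e !normr_le0 => /eqP -> /eqP ->; done.
have key : forall Q : {set {set 'I_N}}, balanced_partition Q K ->
    worst_bias w K KT alpha beta G0 G1 Q = cc R N K * Gm * Hobj w Q.
  by move=> Q hQ; apply: wb_eq.
have kpos : forall Q : {set {set 'I_N}}, balanced_partition Q K -> 0 < cc R N K * Gm.
  move=> Q hQ; have Np := N_pos hQ (ltnW hK).
  apply: mulr_gt0 => //; apply: mulr_gt0; first by apply: divr_gt0; rewrite ?ltr0n.
  by apply: divr_gt0; rewrite ?subr_gt0 ?ltr0n ?ltr1n // (ltn_trans _ hK).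
split; case=> hPb hmin; split => // Q hQ; have := hmin Q hQ;
  rewrite !key // (ler_pM2l (kpos _ hPb)) //.
Qed.
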